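(* Let $\delta>0$. In the multidimensional knapsack problem, if $q_{\max}:=\max_{i,j}w_{ij}/B_j\le\delta/m$, then the deterministic rounding algorithm returns an integral allocation $x$ satisfying $\sum_ix_iv_i\ge(1-\delta)\sum_ix_i^*v_i$ (and $\sum_iw_{ij}x_i\le B_j$ for all $j$).
   Context: Multidimensional knapsack: a finite set of items $i$, each with value $v_i\ge0$ and weight vector $(w_{i1},\dots,w_{im})\in\mathbb{R}_+^m$, and capacities $B_1,\dots,B_m>0$. The LP relaxation maximizes $\sum_iv_ix_i$ subject to $0\le x_i\le1$ for all $i$ and $\sum_iw_{ij}x_i\le B_j$ for all $j$. Deterministic rounding algorithm: compute a basic (vertex) optimal solution $x^*$ of this LP, and output $x_i=1$ if $x_i^*=1$ and $x_i=0$ otherwise. *)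

(* Defs.v *)
From mathcomp Require Import all_boot all_order all_algebra.
Set Implicit Arguments. Unset Strict Implicit. Unset Printing Implicit Defensive.
Import Order.TTheory GRing.Theory Num.Theory.
Local Open Scope ring_scope.

Definition lp_feasible (R : realFieldType) (n m : nat)
  (w : 'I_n -> 'I_m -> R) (B : 'I_m -> R) (x : 'I_n -> R) : Prop :=
  (forall i, 0 <= x i <= 1) /\ (forall j, \sum_(i < n) w i j * x i <= B j).

Definition lp_value (R : realFieldType) (n : nat) (v : 'I_n -> R) (x : 'I_n -> R) : R :=
  \sum_(i < n) v i * x i.

Definition lp_optimal (R : realFieldType) (n m : nat) (v : 'I_n -> R)
  (w : 'I_n -> 'I_m -> R) (B : 'I_m -> R) (x : 'I_n -> R) : Prop :=
  lp_feasible w B x /\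
  forall y, lp_feasible w B y -> lp_value v y <= lp_value v x.

(* x is a vertex (extreme point, equivalently basic feasible solution) of the
   LP feasible polytope: it is not the midpoint of two distinct feasible points. *)
Definition lp_vertex (R : realFieldType) (n m : nat)
  (w : 'I_n -> 'I_m -> R) (B : 'I_m -> R) (x : 'I_n -> R) : Prop :=
  lp_feasible w B x /\
  forall y z, lp_feasible w B y -> lp_feasible w B z ->
    (forall i, x i = (y i + z i) / 2%:R) -> y = z.

Definition round01 (R : realFieldType) (n : nat) (xs : 'I_n -> R) : 'I_n -> R :=
  fun i => if xs i == 1 then 1 else 0.

(* Main.v *)
Require Import Defs.
From mathcomp Require Import all_boot all_order all_algebra.
From mathcomp Require Import ring lra zify.
Import Order.TTheory GRing.Theory Num.Theory.
Local Open Scope ring_scope.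

Lemma ker_vec (R : fieldType) k m (A : 'M[R]_(k, m)) :
  (m < k)%N -> exists u : 'rV_k, u != 0 /\ u *m A = 0.
Proof.
move=> hmk.
have hK : kermx A != 0.
  rewrite kermx_eq0 /row_free; apply/negP => /eqP h.
  have := rank_leq_col A; rewrite h; lia.
have [r hr] : exists r, row r (kermx A) != 0.
  apply/existsP; apply: contraR hK; rewrite negb_exists => /forallP h.
  apply/eqP/matrixP => i j; have := h i; rewrite negbK => /eqP/matrixP/(_ 0 j).
  by rewrite !mxE.
exists (row r (kermx A)); split => //.
by rewrite -row_mul mulmx_ker row0.
Qed.

Lemma distr5 (R : comNzRingType) (a b c d e : R) : a * (b * c + d * e) = b * (a * c) + d * (a * e).
Proof. ring. Qed.

Lemma frac_bound (R : realFieldType) (n m : nat)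
  (v : 'I_n -> R) (w : 'I_n -> 'I_m -> R) (B : 'I_m -> R) (q : R)
  (xs : 'I_n -> R) f :
  0 < q -> (forall j, 0 < B j) ->
  (forall i j, w i j / B j <= q) ->
  lp_optimal v w B xs -> xs f < 1 ->
  v f <= q * lp_value v xs.
Proof.
move=> hq hB hw [[hb hc] hopt] hf.
have hf0 : 0 <= xs f by case/andP: (hb f).
set s := (1 - xs f) / (1 + q).
set t := q * s.
have hs : 0 < s by apply: divr_gt0; lra.
have hs1 : s <= 1 - xs f.
  rewrite /s ler_pdivrMr; last lra.
  have : 0 <= (1 - xs f) * q by apply: mulr_ge0; lra.
  lra.
have ht1 : t <= 1.
  rewrite /t /s mulrA ler_pdivrMr; last lra.
  have : q * xs f >= 0 by apply: mulr_ge0; lra.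
  lra.
have ht0 : 0 < t by apply: mulr_gt0.
pose y i := (1 - t) * xs i + s * (i == f)%:R.
have hy : lp_feasible w B y.
  split.
    move=> i; rewrite /y; case: eqP => [->|_]; case/andP: (hb i) => h1 h2.
      rewrite mulr1; apply/andP; split.
        have : 0 <= (1 - t) * xs f by apply: mulr_ge0; lra.
        lra.
      have : t * xs f >= 0 by apply: mulr_ge0; lra.
      lra.
    rewrite mulr0 addr0; apply/andP; split; first by apply: mulr_ge0; lra.
    have : t * xs i >= 0 by apply: mulr_ge0; lra.
    lra.
  move=> j.
  rewrite /y.
  under eq_bigr do rewrite distr5.
  rewrite big_split /= -mulr_sumr.
  have -> : \sum_(i < n) s * (w i j * (i == f)%:R) = s * w f j.
    rewrite (bigD1 f) //= eqxx mulr1 big1 ?addr0 // => i /negPf h.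
    by rewrite h !mulr0.
  have h1 := hc j.
  have hwf : w f j <= q * B j.
    by have := hw f j; rewrite ler_pdivrMr.
  have h2 : (1 - t) * (\sum_i w i j * xs i) <= (1 - t) * B j.
    by apply: ler_wpM2l; lra.
  have h3 : s * w f j <= s * (q * B j) by apply: ler_wpM2l; lra.
  rewrite /t in h2 *.
  have : (1 - q * s) * B j + q * s * B j = B j by ring.
  lra.
have := hopt y hy.
rewrite /lp_value /y.
under eq_bigr do rewrite distr5.
rewrite big_split /= -mulr_sumr.
have -> : \sum_(i < n) s * (v i * (i == f)%:R) = s * v f.
  rewrite (bigD1 f) //= eqxx mulr1 big1 ?addr0 // => i /negPf h.
  by rewrite h !mulr0.
move=> h.
have : s * v f <= s * (q * \sum_i v i * xs i).
  rewrite /t in h.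
  have : v f * s <= q * s * \sum_i v i * xs i.
    set S := \sum_i v i * xs i in h *.
    have e : (1 - q * s) * S = S - q * s * S by ring.
    rewrite e in h.
    have : v f * s = s * v f by ring.
    lra.
  have -> : q * s * (\sum_i v i * xs i) = s * (q * \sum_i v i * xs i) by ring.
  by rewrite mulrC.
by rewrite ler_pM2l.
Qed.
Lemma frac_card (R : realFieldType) (n m : nat)
  (w : 'I_n -> 'I_m -> R) (B : 'I_m -> R) (xs : 'I_n -> R) :
  lp_vertex w B xs -> (#|[set i | (0 < xs i < 1)%R]| <= m)%N.
Proof.
move=> [[hb hc] hv].
set F := [set i | 0 < xs i < 1].
rewrite leqNgt; apply/negP => hlt.
pose A := \matrix_(a < #|F|, j < m) w (enum_val a) j.
have [u [hu0 huA]] := @ker_vec _ _ _ A hlt.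
pose d i := \sum_(a < #|F|) u 0 a * (enum_val a == i)%:R.
have d1 : forall j, \sum_i w i j * d i = 0.
  move=> j.
  rewrite (_ : \sum_i w i j * d i = (u *m A) 0 j); first by rewrite huA mxE.
  rewrite mxE /d.
  under eq_bigr do rewrite mulr_sumr.
  rewrite exchange_big /=; apply: eq_bigr => a _.
  rewrite mxE (bigD1 (enum_val a)) //= eqxx big1 ?addr0; first by rewrite mulr1 mulrC.
  by move=> i /negPf h; rewrite eq_sym h !mulr0.
have d2 : forall i, i \notin F -> d i = 0.
  move=> i hi; rewrite /d big1 // => a _.
  case: eqP => [e|]; last by rewrite mulr0.
  by move: hi; rewrite -e enum_valP.
have [i0 [hi0F hi0]] : exists i, i \in F /\ d i != 0.
  have [a ha] : exists a, u 0 a != 0.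
    apply/existsP; apply: contraR hu0; rewrite negb_exists => /forallP h.
    apply/eqP/matrixP => i j; rewrite (ord1 i) mxE; apply/eqP.
    by have := h j; rewrite negbK.
  exists (enum_val a); split; first exact: enum_valP.
  rewrite /d (bigD1 a) //= eqxx mulr1 big1 ?addr0 // => b hab.
  case: eqP => [/enum_val_inj e|]; last by rewrite mulr0.
  by move: hab; rewrite e eqxx.
pose g i := xs i * (1 - xs i).
have hg : forall i, i \in F -> 0 < g i /\ g i <= xs i /\ g i <= 1 - xs i /\ g i <= 1.
  move=> i; rewrite inE => /andP [h1 h2].
  have h3 : 0 < g i by apply: mulr_gt0; lra.
  have h4 : xs i * xs i >= 0 by apply: mulr_ge0; lra.
  have h5 : (1 - xs i) * (1 - xs i) >= 0 by apply: mulr_ge0; lra.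
  have h6 : (1 - xs i) * (1 - xs i) = 1 - xs i - g i by rewrite /g; ring.
  have : g i = xs i - xs i * xs i by rewrite /g; ring.
  lra.
pose gm := \prod_(i in F) g i.
have hgm0 : 0 < gm by apply: prodr_gt0 => i /hg; lra.
have hgm : forall i, i \in F -> gm <= g i.
  move=> i hi; rewrite /gm (bigD1 i) //=.
  have : \prod_(j in F | j != i) g j <= 1.
    by apply: prodr_ile1 => j /andP [/hg hj _]; lra.
  have := hg i hi => -[h1 _].
  move=> h; rewrite -{2}(mulr1 (g i)); apply: ler_wpM2l; lra.
pose S := 1 + \sum_i `|d i|.
have hS : forall i, `|d i| <= S - 1.
  move=> i; rewrite /S (bigD1 i) //=.
  have : 0 <= \sum_(j < n | j != i) `|d j| by apply: sumr_ge0 => j _.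
  lra.
have hS0 : 0 < S by have := hS i0; have := normr_ge0 (d i0); lra.
pose eps := gm / S.
have heps : 0 < eps by apply: divr_gt0.
have hed : forall i, i \in F -> `|eps * d i| <= g i.
  move=> i hi; rewrite normrM (gtr0_norm heps) /eps mulrAC ler_pdivrMr //.
  apply: (le_trans (y := gm * S)).
    apply: ler_wpM2l; first lra.
    have := hS i; lra.
  apply: ler_wpM2r; [lra | exact: hgm].
have feas : forall c : R, (c = 1 \/ c = -1) -> lp_feasible w B (fun i => xs i + c * eps * d i).
  move=> c hcs; split.
    move=> i; case: (boolP (i \in F)) => hi.
      have h := hed i hi; have := hg i hi => -[_ [h1 [h2 _]]].
      have h3 : - (eps * d i) <= g i.
        apply: le_trans h; rewrite -normrN; exact: ler_norm.
      have h4 : eps * d i <= g i by apply: le_trans h; exact: ler_norm.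
      case: hcs => ->; rewrite ?mul1r ?mulN1r; apply/andP; split; lra.
    by rewrite d2 // mulr0 addr0; exact: hb.
  move=> j.
  have -> : \sum_i w i j * (xs i + c * eps * d i) = \sum_i w i j * xs i + c * eps * \sum_i w i j * d i.
    rewrite mulr_sumr -big_split /=; apply: eq_bigr => i _; ring.
  by rewrite d1 mulr0 addr0.
have := hv _ _ (feas 1 (or_introl erefl)) (feas (-1) (or_intror erefl)).
have e : forall i, xs i = ((xs i + 1 * eps * d i) + (xs i + -1 * eps * d i)) / 2%:R.
  by move=> i; field.
move=> /(_ e) /(congr1 (fun f => f i0)) /= h.
have : eps * d i0 = 0 by lra.
move/eqP; rewrite mulf_eq0 (negPf hi0) orbF => /eqP; lra.
Qed.

Theorem lemma4 (R : realFieldType) (n m : nat)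
  (v : 'I_n -> R) (w : 'I_n -> 'I_m -> R) (B : 'I_m -> R) (delta : R)
  (xs : 'I_n -> R) :
  0 < delta ->
  (forall i, 0 <= v i) ->
  (forall i j, 0 <= w i j) ->
  (forall j, 0 < B j) ->
  (forall i j, w i j / B j <= delta / m%:R) ->
  lp_optimal v w B xs ->
  lp_vertex w B xs ->
  lp_value v (round01 xs) >= (1 - delta) * lp_value v xs /\
  (forall j, \sum_(i < n) w i j * round01 xs i <= B j).
Proof.
move=> hd hv hw hB hq hopt hvert.
have hopt' := hopt; case: hopt' => [[hb hc] _].
have hr : forall i, 0 <= round01 xs i <= xs i.
  move=> i; rewrite /round01; case: eqP => [->|_]; first by rewrite ler01 lexx.
  by rewrite lexx; case/andP: (hb i).
split; last first.
  move=> j; apply: le_trans (hc j); apply: ler_sum => i _.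
  by apply: ler_wpM2l => //; case/andP: (hr i).
set OPT := lp_value v xs.
have hO : 0 <= OPT by apply: sumr_ge0 => i _; apply: mulr_ge0 => //; case/andP: (hb i).
set q := delta / m%:R.
have hq0 : 0 <= q by apply: divr_ge0; [lra | exact: ler0n].
set F := [set i | (0 < xs i < 1)%R].
have hcard := @frac_card _ _ _ w B xs hvert; rewrite -/F in hcard.
have claim : forall i, v i * xs i - v i * round01 xs i <= (if i \in F then q * OPT else 0).
  move=> i; rewrite /round01; case: eqP => [->|hne]; first by rewrite subrr; case: ifP => // _; apply: mulr_ge0.
  rewrite mulr0 subr0; case: ifP => hiF.
    have hm : (0 < m)%N.
      apply: leq_trans hcard; rewrite card_gt0; apply/set0Pn; by exists i.
    have hqp : 0 < q by apply: divr_gt0 => //; rewrite ltr0n.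
    have hx : xs i < 1 by move: hiF; rewrite inE => /andP [].
    have hfb : v i <= q * OPT by exact: (@frac_bound _ _ _ v w B q xs i hqp hB hq hopt hx).
    case/andP: (hb i) => h1 h2.
    have : v i * xs i <= v i * 1 by apply: ler_wpM2l.
    rewrite mulr1 => h3; exact: le_trans h3 hfb.
  move: hiF; rewrite inE => /negbT; case/andP: (hb i) => h1 h2.
  have : xs i != 1 by apply/eqP.
  rewrite negb_and -!leNgt => hne' /orP [h|h].
    have -> : xs i = 0 by lra.
    by rewrite mulr0.
  by move: hne'; rewrite eq_le h h2.
have hsum : OPT - lp_value v (round01 xs) <= q * OPT *+ #|F|.
  rewrite -sumr_const big_mkcond /= /OPT /lp_value -sumrB.
  by apply: ler_sum => i _; apply: claim.
have hmq : q * OPT *+ #|F| <= delta * OPT.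
  rewrite -mulr_natl.
  apply: (le_trans (y := m%:R * (q * OPT))).
    by apply: ler_wpM2r; [apply: mulr_ge0 | rewrite ler_nat].
  rewrite mulrA; apply: ler_wpM2r => //.
  case: (posnP m) => [->|hm]; first by rewrite mul0r; lra.
  by rewrite /q mulrCA divff ?mulr1 // pnatr_eq0 -lt0n hm.
lra.
Qed.
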